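(* Let $n\ge2$, let $f$ be a $\gamma_{tr2}(P_2\square P_n)$-function such that the number of vertices $v$ with $f(v)=\emptyset$ is minimum among all $\gamma_{tr2}(P_2\square P_n)$-functions, and let $a_j=|f((0,j))|+|f((1,j))|$ for $j\in\{0,\dots,n-1\}$. Then $a_j+a_{j+1}\ge3$ for every $j\in\{0,1,\dots,n-2\}$.
   Context: $P_m$ denotes the directed path with vertex set $\{0,1,\dots,m-1\}$ and arcs $(i,i+1)$ for $0\le i\le m-2$. The Cartesian product $D_1\square D_2$ has vertex set $V(D_1)\times V(D_2)$, with an arc from $(x_1,y_1)$ to $(x_2,y_2)$ iff either $(x_1,x_2)$ is an arc of $D_1$ and $y_1=y_2$, or $x_1=x_2$ and $(y_1,y_2)$ is an arc of $D_2$. For a digraph $D$ and positive integer $k$, a $k$-rainbow dominating function on $D$ is $f:V(D)\to\mathcal P(\{1,\dots,k\})$ such that every $v$ with $f(v)=\emptyset$ satisfies $\bigcup_{u\in N^-(v)}f(u)=\{1,\dots,k\}$, where $N^-(v)$ is the set of in-neighbors of $v$; its weight is $\sum_v|f(v)|$. It is total if additionally the subdigraph induced by $\{v:f(v)\ne\emptyset\}$ has no isolated vertex (a vertex with neither in- nor out-neighbors in it). $\gamma_{trk}(D)$ is the minimum weight of a total $k$-rainbow dominating function, and a $\gamma_{trk}(D)$-function is one attaining it. *)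

(* Defs.v *)
From mathcomp Require Import all_boot.
Set Implicit Arguments. Unset Strict Implicit. Unset Printing Implicit Defensive.

Definition path_arc (m : nat) : rel (ordinal m) := fun (i j : ordinal m) => val j == (val i).+1.

Definition cart_arc (T1 T2 : finType) (a1 : rel T1) (a2 : rel T2) : rel (T1 * T2) :=
  fun x y => (a1 x.1 y.1 && (x.2 == y.2)) || ((x.1 == y.1) && a2 x.2 y.2).

(* Colours {1,..,k} are represented by 'I_k. *)
Section Rainbow.
Variables (T : finType) (arc : rel T) (k : nat).

Definition rainbow_dom (f : T -> {set 'I_k}) : Prop :=
  forall v, f v = set0 -> \bigcup_(u | arc u v) f u = [set: 'I_k].

(* total: no vertex with nonempty label is isolated in the induced subdigraph *)
Definition total_rainbow_dom (f : T -> {set 'I_k}) : Prop :=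
  rainbow_dom f /\
  forall v, f v != set0 ->
    exists u, [&& u != v, f u != set0 & arc u v || arc v u].

Definition rd_weight (f : T -> {set 'I_k}) : nat := \sum_(v : T) #|f v|.

Definition gamma_trk_function (f : T -> {set 'I_k}) : Prop :=
  total_rainbow_dom f /\
  forall g : T -> {set 'I_k}, total_rainbow_dom g -> rd_weight f <= rd_weight g.

Definition num_empty (f : T -> {set 'I_k}) : nat := #|[set v | f v == set0]|.
End Rainbow.

Definition P2Pn_arc (n : nat) : rel ('I_2 * 'I_n) := @cart_arc _ _ (@path_arc 2) (@path_arc n).

(* Main.v *)
Require Import Defs.
From mathcomp Require Import all_boot.
From mathcomp Require Import zify.
Set Implicit Arguments. Unset Strict Implicit. Unset Printing Implicit Defensive.

Lemma I2cases (a : 'I_2) : a = ord0 \/ a = ord_max.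
Proof. case: a => [[|[|k]] h]; [left|right|]; try by apply/val_inj. lia. Qed.

Lemma cover2 (A B : {set 'I_2}) : (forall x, x \in A \/ x \in B) -> 2 <= #|A| + #|B|.
Proof.
move=> H.
have sub : [set: 'I_2] \subset A :|: B.
  apply/subsetP => x _; rewrite inE; case: (H x) => ->; by rewrite ?orbT.
have := subset_leq_card sub; rewrite cardsT card_ord => h.
apply: leq_trans h _; exact: leq_card_setU.
Qed.

Lemma card2 (A : {set 'I_2}) : #|A| <= 2.
Proof. by have := max_card A; rewrite card_ord. Qed.

Lemma card_full (A : {set 'I_2}) : (forall x, x \in A) -> #|A| = 2.
Proof.
move=> H; have -> : A = [set: 'I_2] by apply/setP => x; rewrite inE H.
by rewrite cardsT card_ord.
Qed.

Lemma card_ne0 (T : finType) (A : {set T}) : A != set0 -> 1 <= #|A|.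
Proof. by rewrite card_gt0. Qed.

Lemma card_eq0' (T : finType) (A : {set T}) : A = set0 -> #|A| = 0.
Proof. by move=> ->; rewrite cards0. Qed.

Section S.
Variable n : nat.
Notation V := ('I_2 * 'I_n)%type.
Notation arc := (@P2Pn_arc n).

Lemma arcE (u v : V) : arc u v =
  ((u.1 == ord0) && (v.1 == ord_max) && (u.2 == v.2)) ||
  ((u.1 == v.1) && (val v.2 == (val u.2).+1)).
Proof.
case: u => a b; case: v => c d; rewrite /P2Pn_arc /cart_arc /path_arc /=.
by case: (I2cases a) => ->; case: (I2cases c) => ->.
Qed.

Lemma arc_in_top u (v : 'I_n) : arc u (ord0, v) -> u = (ord0, u.2) /\ (val u.2).+1 = val v.
Proof.
case: u => a b; rewrite arcE /=.
case: (I2cases a) => -> /=; first by move/eqP => ->.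
by [].
Qed.

Lemma arc_in_bot u (v : 'I_n) : arc u (ord_max, v) ->
  u = (ord0, v) \/ (u = (ord_max, u.2) /\ (val u.2).+1 = val v).
Proof.
case: u => a b; rewrite arcE /=.
case: (I2cases a) => -> /=.
  by rewrite orbF => /eqP ->; left.
by move/eqP => ->; right.
Qed.

Lemma arc_out_bot u (v : 'I_n) : arc (ord_max, v) u ->
  u = (ord_max, u.2) /\ val u.2 = (val v).+1.
Proof.
case: u => a b; rewrite arcE /=.
case: (I2cases a) => -> /=; first by [].
by move/eqP => ->.
Qed.

Lemma arc_out_top (p : 'I_n) u : arc (ord0, p) u ->
  u = (ord_max, p) \/ (u = (ord0, u.2) /\ val u.2 = (val p).+1).
Proof.
case: u => a b; rewrite arcE /=.
case: (I2cases a) => -> /=.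
  by move/eqP => ->; right.
by rewrite orbF => /eqP ->; left.
Qed.

Variable f : V -> {set 'I_2}.

Lemma F1 (v : 'I_n) : rainbow_dom arc f -> f (ord0, v) = set0 ->
  exists i : 'I_n, (val i).+1 = val v /\ forall x, x \in f (ord0, i).
Proof.
move=> hd h0; have hU := hd _ h0.
have : ord0 \in \bigcup_(u | arc u (ord0, v)) f u by rewrite hU inE.
case/bigcupP => u hu _; have [hu1 hu2] := arc_in_top hu.
exists u.2; split => // x.
have : x \in \bigcup_(u | arc u (ord0, v)) f u by rewrite hU inE.
case/bigcupP => w hw xw; have [hw1 hw2] := arc_in_top hw.
have -> : u.2 = w.2 by apply: ord_inj; simpl in *; lia.
by rewrite -hw1.
Qed.

Lemma F2 (v : 'I_n) : rainbow_dom arc f -> f (ord_max, v) = set0 ->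
  forall x, x \in f (ord0, v) \/ exists i : 'I_n, (val i).+1 = val v /\ x \in f (ord_max, i).
Proof.
move=> hd h0 x; have hU := hd _ h0.
have : x \in \bigcup_(u | arc u (ord_max, v)) f u by rewrite hU inE.
case/bigcupP => u hu xu; case: (arc_in_bot hu) => [e|[e1 e2]].
  by left; rewrite -e.
by right; exists u.2; split => //; rewrite -e1.
Qed.

Lemma lemmaX (hf : gamma_trk_function arc f)
  (hmin : forall g : V -> {set 'I_2}, gamma_trk_function arc g -> num_empty f <= num_empty g)
  (jm j : 'I_n) : (val jm).+1 = val j -> f (ord0, j) = set0 ->
  f (ord_max, jm) != set0 -> False.
Proof.
move=> ejj hj hb.
case: hf => [[hd ht] hw].
pose p : V := (ord0, jm). pose q : V := (ord0, j).
have pq : p != q.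
  apply/negP => /eqP [] e; move: ejj; rewrite e; lia.
pose g := fun v : V => if v == p then [set ord0 : 'I_2]
                       else if v == q then [set ord_max : 'I_2] else f v.
have gp : g p = [set ord0] by rewrite /g eqxx.
have gq : g q = [set ord_max] by rewrite /g eq_sym (negbTE pq) eqxx.
have gE : forall v, v != p -> v != q -> g v = f v.
  by move=> v h1 h2; rewrite /g (negbTE h1) (negbTE h2).
have fp : forall x, x \in f p.
  have [i [ei hi]] := F1 hd hj.
  rewrite /p (_ : jm = i); first exact: hi.
  by apply: ord_inj; simpl in *; lia.
have fq : f q = set0 by [].
have gne : forall v, f v != set0 -> g v != set0.
  move=> v hv; case: (eqVneq v p) => [->|h1]; first by rewrite gp; apply/set0Pn; exists ord0; rewrite inE.
  case: (eqVneq v q) => [->|h2]; first by rewrite gq; apply/set0Pn; exists ord_max; rewrite inE.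
  by rewrite gE.
have g0 : forall v, g v = set0 -> v != p /\ v != q /\ f v = set0.
  move=> v hv; case: (eqVneq v p) => [e|h1].
    by move: hv; rewrite e gp => /setP /(_ ord0); rewrite !inE eqxx.
  case: (eqVneq v q) => [e|h2].
    by move: hv; rewrite e gq => /setP /(_ ord_max); rewrite !inE eqxx.
  by rewrite -gE.
have gtot : total_rainbow_dom arc g.
  split.
    move=> v hv; have [h1 [h2 h3]] := g0 v hv.
    have hU := hd _ h3.
    apply/setP => x; rewrite inE.
    have : x \in \bigcup_(u | arc u v) f u by rewrite hU inE.
    case/bigcupP => u hu xu; apply/bigcupP; exists u => //.
    case: (eqVneq u q) => [e|u2]; first by move: xu; rewrite e fq inE.
    case: (eqVneq u p) => [e|u1]; last by rewrite gE.
    move: hu; rewrite e /p => /arc_out_top [ev|[ev ev2]].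
      by move: h3 hb; rewrite ev => ->; rewrite eqxx.
    move: h2; rewrite ev /q; case/negP; apply/eqP; congr pair; apply: ord_inj; simpl in *; lia.
  move=> v hv; case: (eqVneq v p) => [e|h1].
    exists q; rewrite e eq_sym pq gq /=; apply/andP; split.
      by apply/set0Pn; exists ord_max; rewrite inE.
    by rewrite [arc p q]arcE /= ejj !eqxx /= ?orbT.
  case: (eqVneq v q) => [e|h2].
    exists p; rewrite e pq /=; apply/andP; split.
      by rewrite gp; apply/set0Pn; exists ord0; rewrite inE.
    by rewrite [arc p q]arcE /= ejj !eqxx /= ?orbT.
  have hv' : f v != set0 by rewrite -gE.
  have [u /and3P [uv fu au]] := ht v hv'.
  by exists u; rewrite uv gne.
have qp : q != p by rewrite eq_sym.
have wgf : rd_weight g = rd_weight f.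
  rewrite /rd_weight (bigD1 p) //= (bigD1 q) //=.
  rewrite [in RHS](bigD1 p) //= [in RHS](bigD1 q) //=.
  rewrite gp gq fq cards0 !cards1 (card_full fp).
  have -> : \sum_(i | (i != p) && (i != q)) #|g i| = \sum_(i | (i != p) && (i != q)) #|f i|.
    by apply: eq_bigr => i /andP [h1 h2]; rewrite gE.
  by [].
have gg : gamma_trk_function arc g.
  split; first exact: gtot.
  move=> h0 hh; rewrite wgf; exact: hw h0 hh.
have := hmin g gg.
suff : num_empty g < num_empty f by lia.
apply: proper_card; apply/properP; split.
  apply/subsetP => v; rewrite !inE => /eqP /g0 [_ [_ ->]] //.
exists q; first by rewrite inE fq.
by rewrite inE gq; apply/negP => /eqP /setP /(_ ord_max); rewrite !inE eqxx.
Qed.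

End S.

Theorem lemma4p2 (n : nat) (hn : 2 <= n) (f : 'I_2 * 'I_n -> {set 'I_2})
  (hf : gamma_trk_function (@P2Pn_arc n) f)
  (hmin : forall g : 'I_2 * 'I_n -> {set 'I_2},
      gamma_trk_function (@P2Pn_arc n) g -> num_empty f <= num_empty g) :
  let a := fun j : 'I_n => #|f (ord0, j)| + #|f (ord_max, j)| in
  forall j j' : 'I_n, val j' = (val j).+1 -> 3 <= a j + a j'.
Proof.
move=> a j j' ej; rewrite /a.
have [[hd ht] _] := hf.
case: (leqP 3 (#|f (ord0, j)| + #|f (ord_max, j)| + (#|f (ord0, j')| + #|f (ord_max, j')|))) => // hlt.
exfalso.
have c1 := card2 (f (ord0, j)). have c2 := card2 (f (ord_max, j)).
have c3 := card2 (f (ord0, j')). have c4 := card2 (f (ord_max, j')).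
have Bj' : f (ord_max, j') = set0 -> 2 <= #|f (ord0, j')| + #|f (ord_max, j)|.
  move=> h0; apply: cover2 => x; case: (F2 hd h0 x) => [->|[i [ei xi]]]; first by left.
  right; have -> : j = i by apply: ord_inj; simpl in *; lia.
  exact: xi.
have tj' : f (ord0, j') != set0.
  apply/negP => /eqP h0; have [i [ei hi]] := F1 hd h0.
  have ij : i = j by apply: ord_inj; simpl in *; lia.
  have e2 := card_full hi.
  rewrite ij in e2.
  have b0 : #|f (ord_max, j')| = 0 by lia.
  have t0 : #|f (ord0, j')| = 0 by rewrite h0 cards0.
  move: b0 => /eqP; rewrite cards_eq0 => /eqP b0.
  have := Bj' b0; lia.
have ctj' := card_ne0 tj'.
case: (eqVneq (f (ord0, j)) set0) => [tj|tj]; last first.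
  have ctj := card_ne0 tj.
  have b0 : #|f (ord_max, j')| = 0 by lia.
  move: b0 => /eqP; rewrite cards_eq0 => /eqP b0.
  have := Bj' b0; lia.
have [jm [ejm hjm]] := F1 hd tj.
case: (eqVneq (f (ord_max, jm)) set0) => [bjm|bjm]; last first.
  exact: (lemmaX hf hmin ejm tj bjm).
case: (eqVneq (f (ord_max, j)) set0) => [bj|bj].
  have := F2 hd bj ord0; rewrite tj inE => -[//|[i [ei xi]]].
  have ij : i = jm by apply: ord_inj; simpl in *; lia.
  by move: xi; rewrite ij bjm inE.
have [u /and3P [uv fu au]] := ht _ bj.
case/orP: au => au.
  case: (arc_in_bot au) => [e|[e1 e2]].
    by move: fu; rewrite e tj eqxx.
  have ij : u.2 = jm by apply: ord_inj; simpl in *; lia.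
  by move: fu; rewrite e1 ij bjm eqxx.
have [e1 e2] := arc_out_bot au.
have ij : u.2 = j' by apply: ord_inj; simpl in *; lia.
move: fu; rewrite e1 ij => fu.
have := card_ne0 fu; have := card_ne0 bj; lia.
Qed.
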